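(* Let $n\ge k\ge 3$ be integers. Then \[ \mathsf{opt}_{\operatorname{bandit}}^{\operatorname{det}}(n,k)\ge \left(\frac{k}{2}-1\right)\ln(n/k). \]
   Context: Prediction with expert advice in the realizable case: $\mathcal{Y}=\{1,\dots,k\}$, $\mathcal{X}=[k]^n$, experts $h_i(x)=x_i$, $i=1,\dots,n$. $\mathcal{P}_0$ is the set of finite sequences of examples in $\mathcal{X}\times\mathcal{Y}$ consistent with some $h_i$. Bandit feedback: each round the adversary presents $x_t$, a deterministic learner predicts $\hat y_t$ as a function of past observations and $x_t$, and learns only whether $\hat y_t$ equals the true label $y_t$. $\mathsf{opt}_{\operatorname{bandit}}^{\operatorname{det}}(n,k)$ is the infimum over deterministic learners of the supremum over $S\in\mathcal{P}_0$ of the number of mistakes ($\hat y_t\ne y_t$). *)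

(* Defs.v *)
From mathcomp Require Import all_boot all_order all_algebra.
From mathcomp Require Import all_classical all_reals all_analysis.
Set Implicit Arguments. Unset Strict Implicit. Unset Printing Implicit Defensive.
Import Order.TTheory GRing.Theory Num.Theory.

(* Instance space X = [k]^n, labels Y = [k] = 'I_k (labels 1..k encoded as 0..k-1). *)
Definition instance (n k : nat) := {ffun 'I_n -> 'I_k}.

Definition expert (n k : nat) (i : 'I_n) (x : instance n k) : 'I_k := x i.

Definition realizable (n k : nat) (S : seq (instance n k * 'I_k)) : Prop :=
  exists i : 'I_n, forall p, p \in S -> expert i p.1 = p.2.

(* Bandit observation at a past round: the instance x_s, the learner's own
   prediction yhat_s, and the feedback bit [yhat_s == y_s]. *)
Definition observation (n k : nat) := (instance n k * 'I_k * bool)%type.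

Definition det_learner (n k : nat) := seq (observation n k) -> instance n k -> 'I_k.

Fixpoint mistakes_from (n k : nat) (L : det_learner n k) (h : seq (observation n k))
  (S : seq (instance n k * 'I_k)) : nat :=
  match S with
  | [::] => 0
  | (x, y) :: S' =>
      let yh := L h x in
      (yh != y) + mistakes_from L (rcons h (x, yh, yh == y)) S'
  end.

Definition mistakes (n k : nat) (L : det_learner n k) S := mistakes_from L [::] S.

Local Open Scope classical_set_scope.
Local Open Scope ereal_scope.

Definition opt_bandit_det (R : realType) (n k : nat) : \bar R :=
  ereal_inf [set ereal_sup [set ((mistakes L S)%:R)%:E | S in realizable (n:=n) (k:=k)]
            | L in [set: det_learner n k]].

(* Main.v *)
Require Import Defs.
From mathcomp Require Import all_boot all_order all_algebra.
From mathcomp Require Import all_classical all_reals all_analysis.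
From mathcomp Require Import zify.
Import Order.TTheory GRing.Theory Num.Theory.
Local Open Scope ring_scope.

Lemma split_step (n k : nat) (V : {set 'I_n}) (k0 : (0 < k)%N) :
  exists x : instance n k, forall y : 'I_k,
    (k * #|V| <= k * #|[set i in V | x i != y]| + (#|V| + k - 1))%N.
Proof.
set m := #|V|.
set q := ((m + k - 1) %/ k)%N.
pose x : instance n k := [ffun i => insubd (Ordinal k0) (index i (enum V) %/ q)%N].
exists x => y.
have HD : (m = #|[set i in V | x i == y]| + #|[set i in V | x i != y]|)%N.
  rewrite /m -(cardsID [set i | x i == y] V); congr (_ + _)%N; apply: eq_card => i;
  by rewrite !inE andbC.
have Hq : (k * q <= m + k - 1)%N by rewrite mulnC leq_divM.
suff HG : (#|[set i in V | x i == y]| <= q)%N.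
  have := leq_mul (leqnn k) HG; lia.
case: (posnP m) => [m0|mpos].
  have : (#|[set i in V | x i == y]| <= #|V|)%N.
    apply: subset_leq_card; apply/fintype.subsetP => i; rewrite inE; by case/andP.
  by move=> h; apply: leq_trans h _; rewrite -/m m0.
have qpos : (0 < q)%N by rewrite divn_gt0 //; lia.
have Hidx : forall i, i \in V -> (index i (enum V) < m)%N.
  by move=> i iV; rewrite /m cardE index_mem mem_enum.
have Hxv : forall i, i \in V -> val (x i) = (index i (enum V) %/ q)%N.
  move=> i iV; rewrite ffunE val_insubd ifT //.
  rewrite ltn_divLR //; apply: (leq_trans (Hidx i iV)).
  have := leq_divM (m + k - 1) k; rewrite -/q.
  have := divn_eq (m + k - 1) k; rewrite -/q => ediv.
  have := ltn_pmod (m + k - 1) k0.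
  lia.
pose f := fun i : 'I_n => (Ordinal (ltn_pmod (index i (enum V)) qpos)).
have finj : {in [set i in V | x i == y] &, injective f}.
  move=> a b; rewrite !inE => /andP[aV /eqP ay] /andP[bV /eqP b_y] /(congr1 val) /= e.
  have e2 : index a (enum V) = index b (enum V).
    rewrite (divn_eq (index a (enum V)) q) (divn_eq (index b (enum V)) q) e.
    by rewrite -Hxv // -Hxv // ay b_y.
  have := @nth_index _ a a (enum V); rewrite mem_enum => /(_ aV).
  by rewrite e2 nth_index // mem_enum.
rewrite -(card_in_imset finj).
by apply: leq_trans (max_card _) _; rewrite card_ord.
Qed.

Lemma arith_step (k m m' t : nat) : (3 <= k)%N ->
  (k * m <= k * m' + (m + k - 1))%N ->
  (k ^ t.+1 <= m * (k - 2) ^ t)%N ->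
  (k ^ t <= m' * (k - 2) ^ t.-1)%N.
Proof.
move=> k3 Hm H.
case: t H => [|s] /= H.
  rewrite expn0 muln1 in H; rewrite expn0 muln1; nia.
have PK : ((k - 2) ^ s.+1 <= k ^ s.+1)%N by rewrite leq_exp2r; lia.
rewrite !expnS in H PK *.
set P := ((k - 2) ^ s)%N in H PK *; set K := (k ^ s)%N in H PK *.
have Kpos : (0 < K)%N by rewrite expn_gt0; lia.
have km : (k <= m)%N.
  have : (k * (k * K) <= m * (k * K))%N.
    exact: leq_trans H (leq_mul (leqnn m) PK).
  by rewrite leq_mul2r; case/orP => // /eqP; nia.
have : ((k - 2) * m <= k * m')%N by nia.
nia.
Qed.

Lemma adversary (n k : nat) (k3 : (3 <= k)%N) (L : det_learner n k) (t : nat) :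
  forall h (V : {set 'I_n}), (k ^ t <= #|V| * (k - 2) ^ t.-1)%N ->
  exists S, exists2 i, i \in V &
    (forall p, p \in S -> expert i p.1 = p.2) /\ mistakes_from L h S = t.
Proof.
elim: t => [|t IH] h V H.
  rewrite expn0 muln1 in H.
  have [i iV] : exists i, i \in V.
    by apply/set0Pn; rewrite -card_gt0.
  by exists [::]; exists i.
have k0 : (0 < k)%N by lia.
have [x Hx] := @split_step _ _ V k0.
set yh := L h x.
set V' := [set i in V | x i != yh].
have H' : (k ^ t <= #|V'| * (k - 2) ^ t.-1)%N.
  exact: (@arith_step _ _ _ _ k3 (Hx yh) H).
have [S' [i iV' [Hc Hm]]] := IH (rcons h (x, yh, false)) V' H'.
move: iV'; rewrite inE => /andP[iV xi].
exists ((x, x i) :: S'); exists i => //; split.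
  move=> p; rewrite inE => /orP[/eqP -> //|]; exact: Hc.
have e : (yh == x i) = false by rewrite eq_sym (negbTE xi).
by rewrite /= -/yh e Hm add1n.
Qed.

From mathcomp Require Import ring lra.

Lemma real_part (R : realType) (n k s : nat) : (3 <= k)%N -> (k <= n)%N ->
  (s%:R : R) <= (k%:R / 2 - 1) * ln (n%:R / k%:R) ->
  (k ^ s.+1 <= n * (k - 2) ^ s)%N.
Proof.
move=> k3 kn Hs.
rewrite -(ler_nat R) natrM !natrX.
have K3 : (3 : R) <= k%:R by rewrite (ler_nat R 3 k).
have Kn : (k%:R : R) <= n%:R by rewrite ler_nat.
have K2 : ((k - 2)%:R : R) = k%:R - 2 by rewrite natrB //; lia.
rewrite K2 in Hs *.
have Kp : (0 : R) < k%:R by lra.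
have K2p : (0 : R) < k%:R - 2 by lra.
have Np : (0 : R) < n%:R by lra.
have P1 : (0 : R) < k%:R ^+ s.+1 by exact: exprn_gt0.
have P2 : (0 : R) < n%:R * (k%:R - 2) ^+ s by rewrite mulr_gt0 // exprn_gt0.
rewrite -(ler_ln (x := k%:R ^+ s.+1)) ?posrE //.
rewrite lnXn // lnM ?posrE ?exprn_gt0 // lnXn //.
rewrite -(mulr_natr (ln (k%:R : R))) -(mulr_natr (ln (k%:R - 2 : R))) -addn1 natrD.
rewrite ln_div ?posrE // in Hs.
set a := ln (k%:R : R) in Hs *; set b := ln (k%:R - 2 : R); set N := ln (n%:R : R) in Hs *.
set S := (s%:R : R) in Hs *.
set d := 2 / (k%:R - 2 : R).
have dp : 0 < d by rewrite divr_gt0.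
have dK : d * (k%:R / 2 - 1) = 1 by rewrite /d; field; lra.
have hab : a - b <= d.
  rewrite /a /b -ln_div ?posrE //.
  have -> : (k%:R / (k%:R - 2) : R) = 1 + d by rewrite /d; field; lra.
  by apply: le_ln1Dx; lra.
have S0 : 0 <= S by rewrite /S.
have h1 : S * (a - b) <= S * d by apply: ler_wpM2l.
have h2 : S * d <= (k%:R / 2 - 1) * (N - a) * d by apply: ler_wpM2r => //; lra.
have h3 : (k%:R / 2 - 1) * (N - a) * d = N - a.
  by rewrite mulrC mulrA dK mul1r.
have : S * (a - b) <= N - a by lra.
move=> h4.
have -> : a * (S + 1) = S * (a - b) + a + b * S by ring.
lra.
Qed.

Theorem lemma4p5 (R : realType) (n k : nat) (hk : (3 <= k)%N) (hkn : (k <= n)%N) :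
  (((k%:R / 2 - 1) * ln (n%:R / k%:R) : R)%:E <= opt_bandit_det R n k)%E.
Proof.
set c := ((k%:R / 2 - 1) * ln (n%:R / k%:R) : R).
have K3 : (3 : R) <= k%:R by rewrite (ler_nat R 3 k).
have Kn : (k%:R : R) <= n%:R by rewrite ler_nat.
have c0 : 0 <= c.
  apply: mulr_ge0; first lra.
  apply: ln_ge0; rewrite ler_pdivlMr; lra.
set s := Num.trunc c.
have Hs : (s%:R : R) <= c by rewrite truncn_le.
have Hc : c < s.+1%:R by exact: truncnS_gt.
have Hnat := @real_part R n k s hk hkn Hs.
apply: le_ereal_inf_tmp => _ [L _ <-].
have Hv : (k ^ s.+1 <= #|[set: 'I_n]| * (k - 2) ^ (s.+1).-1)%N.
  by rewrite cardsT card_ord.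
have [S [i _ [Hcons Hm]]] := @adversary n k hk L s.+1 [::] [set: 'I_n]%SET Hv.
have mem : [set ((mistakes L S0)%:R : R)%:E | S0 in @realizable n k]%classic
             ((s.+1)%:R : R)%:E.
  by exists S; [exists i | rewrite /mistakes Hm].
apply: le_trans (ereal_sup_ubound mem).
by rewrite lee_fin; exact: ltW.
Qed.
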